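(* Let $R$ be a commutative ring and let $\mathcal X'(R):=\mathcal X'(\mathrm{Spec}(R))$. Then the map $$\mathscr J:\mathcal X'(R)^{\mathrm{zar}}\to\mathrm{Rd}(R)^{\mathrm{inv}},\qquad C\mapsto\bigcap\{P\in\mathrm{Spec}(R)\mid P\in C\}$$ is a homeomorphism. In particular, $\mathcal X'(R)$ with the Zariski topology is a spectral space. Moreover, the same map $\mathscr J$ is a homeomorphism between $\mathcal X'(R)^{\mathrm{inv}}$ and $\mathrm{Rd}(R)^{\mathrm{hk}}$.
   Context: For a spectral space $X$, $\mathcal X'(X)$ is the set of nonempty closed subsets of $X$, with the Zariski topology having as basis of open sets $\mathcal U'(\Omega):=\{Y\in\mathcal X'(X)\mid Y\cap\Omega=\emptyset\}$, $\Omega$ ranging over quasi-compact open subsets of $X$; $\mathrm{Spec}(R)$ carries the Zariski topology. $\mathrm{Rd}(R)$ is the set of proper radical ideals of $R$; $\mathrm{Rd}(R)^{\mathrm{hk}}$ denotes it with the hull-kernel topology, whose subbasis of closed sets consists of the sets $\{H\in\mathrm{Rd}(R)\mid x_1,\dots,x_n\in H\}$ for $x_1,\dots,x_n\in R$ (with this topology it is spectral). For a spectral space $Y$, $Y^{\mathrm{inv}}$ denotes $Y$ with the inverse topology, having the quasi-compact open subsets of $Y$ as a basis of closed sets. *)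

(* Defs.v *)
(* R is a commutative ring (possibly the zero ring). *)
From HB Require Import structures.
From mathcomp Require Import all_boot all_order all_algebra.
From Stdlib Require List.
Set Implicit Arguments. Unset Strict Implicit. Unset Printing Implicit Defensive.
Import GRing.Theory.
Local Open Scope ring_scope.

(* A topology on X is represented by its predicate "is open". *)
Definition topology (X : Type) := (X -> Prop) -> Prop.

Definition generated {X : Type} (B : (X -> Prop) -> Prop) : topology X :=
  fun U => forall x, U x ->
    exists l : list (X -> Prop),
      (forall V, List.In V l -> B V /\ V x) /\
      (forall y, (forall V, List.In V l -> V y) -> U y).

Definition generated_closed {X : Type} (F : (X -> Prop) -> Prop) : topology X :=
  generated (fun U => exists C, F C /\ forall x, U x <-> ~ C x).

Definition is_closed {X : Type} (T : topology X) (C : X -> Prop) : Prop :=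
  T (fun x => ~ C x).

Definition quasi_compact {X : Type} (T : topology X) (K : X -> Prop) : Prop :=
  forall (Cov : (X -> Prop) -> Prop),
    (forall U, Cov U -> T U) ->
    (forall x, K x -> exists U, Cov U /\ U x) ->
    exists l : list (X -> Prop),
      (forall U, List.In U l -> Cov U) /\
      (forall x, K x -> exists U, List.In U l /\ U x).

Definition continuous {X Y : Type} (TX : topology X) (TY : topology Y)
  (f : X -> Y) : Prop :=
  forall V, TY V -> TX (fun x => V (f x)).

Definition homeomorphism {X Y : Type} (TX : topology X) (TY : topology Y)
  (f : X -> Y) : Prop :=
  exists g : Y -> X,
    (forall x, g (f x) = x) /\ (forall y, f (g y) = y) /\
    continuous TX TY f /\ continuous TY TX g.

(* Closure of a point: y is in the closure of {x} iff every open set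
   containing y contains x. *)
Definition in_closure_pt {X : Type} (T : topology X) (x y : X) : Prop :=
  forall U, T U -> U y -> U x.

Definition irreducible {X : Type} (T : topology X) (C : X -> Prop) : Prop :=
  (exists x, C x) /\
  forall C1 C2, is_closed T C1 -> is_closed T C2 ->
    (forall x, C x -> C1 x \/ C2 x) ->
    (forall x, C x -> C1 x) \/ (forall x, C x -> C2 x).

(* Spectral space (Hochster): T0, quasi-compact, sober, and the quasi-compact
   open sets are closed under finite intersections and form a basis. *)
Definition spectral {X : Type} (T : topology X) : Prop :=
  (forall x y, (forall U, T U -> (U x <-> U y)) -> x = y) /\
  quasi_compact T (fun _ => True) /\
  (forall U V, T U -> quasi_compact T U -> T V -> quasi_compact T V ->
     quasi_compact T (fun x => U x /\ V x)) /\
  (forall U x, T U -> U x ->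
     exists V, T V /\ quasi_compact T V /\ V x /\ forall y, V y -> U y) /\
  (forall C, is_closed T C -> irreducible T C ->
     exists x, forall y, C y <-> in_closure_pt T x y).

Definition inverse_top {X : Type} (T : topology X) : topology X :=
  generated_closed (fun K => T K /\ quasi_compact T K).

Section Ring.
Variable R : comPzRingType.

Definition is_ideal (I : R -> Prop) : Prop :=
  I 0 /\ (forall x y, I x -> I y -> I (x + y)) /\
  (forall a x, I x -> I (a * x)).

Definition is_prime_ideal (P : R -> Prop) : Prop :=
  is_ideal P /\ ~ P 1 /\ (forall x y, P (x * y) -> P x \/ P y).

Definition is_proper_radical_ideal (I : R -> Prop) : Prop :=
  is_ideal I /\ ~ I 1 /\ (forall x (n : nat), I (x ^+ n) -> I x).

Definition Spec : Type := {P : R -> Prop | is_prime_ideal P}.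

Definition zariski : topology Spec :=
  generated (fun U => exists f : R, forall P : Spec, U P <-> ~ sval P f).

Definition Xp : Type :=
  {C : Spec -> Prop | is_closed zariski C /\ exists P, C P}.

Definition Xp_zar : topology Xp :=
  generated (fun U => exists Om : Spec -> Prop,
    zariski Om /\ quasi_compact zariski Om /\
    forall Y : Xp, U Y <-> (forall P, sval Y P -> Om P -> False)).

Definition Rd : Type := {I : R -> Prop | is_proper_radical_ideal I}.

Definition Rd_hk : topology Rd :=
  generated_closed (fun C => exists xs : list R,
    forall H : Rd, C H <-> (forall x, List.In x xs -> sval H x)).

Definition Jmap (C : Xp) : R -> Prop :=
  fun x => forall P : Spec, sval C P -> sval P x.

End Ring.

Arguments zariski R : clear implicits.
Arguments Xp_zar R : clear implicits.
Arguments Rd_hk R : clear implicits.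
Arguments Jmap R C x : clear implicits.

(* Main.v *)
Require Import Defs.
From HB Require Import structures.
From mathcomp Require Import all_boot all_order all_algebra.
From mathcomp Require Import ring.
From mathcomp Require classical_sets boolp.
From Stdlib Require Import Classical FunctionalExtensionality PropExtensionality ProofIrrelevance.
From Stdlib Require List.
Import GRing.Theory.
Local Open Scope ring_scope.

Section Topo.
Variable X : Type.
Variable B : (X -> Prop) -> Prop.

Lemma gen_sub V : B V -> generated B V.
Proof.
intros HV x Vx. exists (cons V nil). split.
- intros W [<-|[]]. auto.
- intros y Hy. apply Hy; left; auto.
Qed.

Lemma gen_local U : (forall x, U x -> exists W, generated B W /\ W x /\ forall y, W y -> U y) -> generated B U.
Proof.
intros H x Ux. destruct (H x Ux) as (W & HW & Wx & WU).
destruct (HW x Wx) as (l & Hl & Hl2). exists l; split; auto.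
Qed.

Lemma gen_ext U V : (forall x, U x <-> V x) -> generated B U -> generated B V.
Proof.
intros E HU x Vx. destruct (HU x (proj2 (E x) Vx)) as (l&h1&h2).
exists l; split; auto; intros; apply E; auto.
Qed.

Lemma gen_full : generated B (fun _ => True).
Proof. intros x _. exists nil. split; [intros V []| auto]. Qed.

Lemma gen_inter U V : generated B U -> generated B V -> generated B (fun x => U x /\ V x).
Proof.
intros HU HV x [Ux Vx]. destruct (HU x Ux) as (l1&a1&b1). destruct (HV x Vx) as (l2&a2&b2).
exists (List.app l1 l2). split.
- intros W HW. apply List.in_app_or in HW. destruct HW; auto.
- intros y Hy. split; [apply b1|apply b2]; intros W HW; apply Hy; apply List.in_or_app; auto.
Qed.

Lemma gen_inter_list {A} (l : list A) (O : A -> X -> Prop) :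
  (forall a, List.In a l -> generated B (O a)) ->
  generated B (fun x => forall a, List.In a l -> O a x).
Proof.
induction l as [|a l IH]; intros H.
- eapply gen_ext; [|apply gen_full]. intros x; split; auto. intros _ a [].
- eapply gen_ext; [| apply gen_inter; [apply (H a); left; auto | apply IH; intros; apply H; right; auto]].
  intros x; simpl; split.
  + intros [h1 h2] b [<-|hb]; auto.
  + intros h; split; auto.
Qed.

Lemma gen_union {A} (P : A -> Prop) (O : A -> X -> Prop) :
  (forall a, P a -> generated B (O a)) ->
  generated B (fun x => exists a, P a /\ O a x).
Proof.
intros H. apply gen_local. intros x (a & Pa & Oa). exists (O a). split; auto.
split; auto. intros y hy; exists a; auto.
Qed.

Lemma gen_cnf {A} (ls : list (list A)) (O : A -> X -> Prop) :
  (forall l a, List.In l ls -> List.In a l -> generated B (O a)) ->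
  generated B (fun x => forall l, List.In l ls -> exists a, List.In a l /\ O a x).
Proof.
intros H. apply (gen_inter_list ls (fun l x => exists a, List.In a l /\ O a x)).
intros l hl. apply gen_union. intros a ha. apply (H l); auto.
Qed.

Lemma qc_decomp K : quasi_compact (generated B) K -> generated B K ->
  exists ls : list (list (X -> Prop)),
    (forall l V, List.In l ls -> List.In V l -> B V) /\
    forall x, K x <-> exists l, List.In l ls /\ forall V, List.In V l -> V x.
Proof.
intros qc op.
set (Cov := fun W : X -> Prop => exists l, (forall V, List.In V l -> B V) /\
   (forall x, W x <-> forall V, List.In V l -> V x) /\ (forall x, W x -> K x)).
destruct (qc Cov) as (Ws & h1 & h2).
- intros W (l & a & b & c). eapply gen_ext.
  + intros x; symmetry; apply b.
  + apply (gen_inter_list l (fun V => V)). intros; apply gen_sub; auto.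
- intros x Kx. destruct (op x Kx) as (l & a & b).
  exists (fun y => forall V, List.In V l -> V y). split.
  + exists l. split; [intros; apply a; auto|split; [intros; tauto|auto]].
  + intros; apply a; auto.
- assert (exists ls : list (list (X -> Prop)),
    (forall l V, List.In l ls -> List.In V l -> B V) /\
    forall x, (exists W, List.In W Ws /\ W x) <-> exists l, List.In l ls /\ forall V, List.In V l -> V x) as (ls & g1 & g2).
  { clear h2. induction Ws as [|W Ws IH].
    - exists nil. split; [intros l V []|]. intros x; split; intros (? & [] & _).
    - destruct IH as (ls & g1 & g2).
      + intros U hU; apply h1; right; auto.
      + destruct (h1 W (or_introl (erefl _))) as (l & a & b & c).
        exists (cons l ls). split.
        * intros l' V [<-|hl] hV; eauto.
        * intros x; split.
          -- intros (W' & [<-|hW] & hx).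
             ++ exists l; split; [left; auto| apply b; auto].
             ++ destruct (proj1 (g2 x) (ex_intro _ W' (conj hW hx))) as (l' & q1 & q2).
                exists l'; split; [right|]; auto.
          -- intros (l' & [<-|hl] & hx).
             ++ exists W; split; [left; auto| apply b; auto].
             ++ destruct (proj2 (g2 x) (ex_intro _ l' (conj hl hx))) as (W' & q1 & q2).
                exists W'; split; [right|]; auto. }
  exists ls. split; auto. intros x; split.
  + intros Kx. apply g2. auto.
  + intros hx. apply g2 in hx. destruct hx as (W & hW & Wx).
    destruct (h1 W hW) as (l & a & b & c). auto.
Qed.

End Topo.
Arguments gen_sub {X B}.
Arguments gen_local {X B}.
Arguments gen_ext {X B}.
Arguments gen_full {X B}.
Arguments gen_inter {X B}.
Arguments gen_inter_list {X B A}.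
Arguments gen_union {X B A}.
Arguments gen_cnf {X B A}.
Arguments qc_decomp {X B}.

Lemma cont_gen {X Y} (BX : (X -> Prop) -> Prop) (BY : (Y -> Prop) -> Prop) f :
  (forall V, BY V -> generated BX (fun x => V (f x))) ->
  continuous (generated BX) (generated BY) f.
Proof.
intros H V HV. apply gen_local. intros x Vfx. destruct (HV (f x) Vfx) as (l&h1&h2).
exists (fun x => forall W, List.In W l -> W (f x)). split; [|split].
- apply (gen_inter_list l (fun W x => W (f x))). intros W hW; apply H; apply h1; auto.
- intros W hW; apply h1; auto.
- intros y hy; apply h2; auto.
Qed.

Lemma qc_ext {X} (T : topology X) K K' : (forall x, K x <-> K' x) ->
  quasi_compact T K -> quasi_compact T K'.
Proof.
intros E qc Cov h1 h2. destruct (qc Cov h1) as (l & a & b).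
- intros x Kx. apply h2, E, Kx.
- exists l; split; auto. intros x Kx; apply b, E, Kx.
Qed.

Lemma qc_union_list {X A} (T : topology X) (l : list A) (K : A -> X -> Prop) :
  (forall a, List.In a l -> quasi_compact T (K a)) ->
  quasi_compact T (fun x => exists a, List.In a l /\ K a x).
Proof.
induction l as [|a l IH]; intros H Cov h1 h2.
- exists nil. split; [intros U []|]. intros x (? & [] & _).
- destruct (H a (or_introl (erefl _)) Cov h1) as (l1 & a1 & b1).
  { intros x Kx; apply h2; exists a; split; [left|]; auto. }
  destruct (IH (fun b hb => H b (or_intror hb)) Cov h1) as (l2 & a2 & b2).
  { intros x (b & hb & Kx); apply h2; exists b; split; [right|]; auto. }
  exists (List.app l1 l2). split.
  + intros U hU; apply List.in_app_or in hU; destruct hU; auto.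
  + intros x (b & [<-|hb] & Kx).
    * destruct (b1 x Kx) as (U & q1 & q2). exists U; split; auto. apply List.in_or_app; auto.
    * destruct (b2 x (ex_intro _ b (conj hb Kx))) as (U & q1 & q2). exists U; split; auto. apply List.in_or_app; auto.
Qed.

Lemma list_choice {A C} (l : list A) (P : A -> C -> Prop) :
  (forall a, List.In a l -> exists c, P a c) ->
  exists l' : list C, (forall c, List.In c l' -> exists a, List.In a l /\ P a c) /\
                      (forall a, List.In a l -> exists c, List.In c l' /\ P a c).
Proof.
induction l as [|a l IH]; intros H.
- exists nil; split; [intros c []|intros a []].
- destruct (H a (or_introl (erefl _))) as (c & hc).
  destruct IH as (l' & h1 & h2). { intros; apply H; right; auto. }
  exists (cons c l'). split.
  + intros c' [<-|hc']. exists a; split; [left|]; auto.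
    destruct (h1 c' hc') as (a' & q1 & q2). exists a'; split; [right|]; auto.
  + intros a' [<-|ha]. exists c; split; [left|]; auto.
    destruct (h2 a' ha) as (c' & q1 & q2). exists c'; split; [right|]; auto.
Qed.

Lemma not_all_in {A} (l : list A) (P : A -> Prop) :
  ~ (forall a, List.In a l -> P a) <-> exists a, List.In a l /\ ~ P a.
Proof.
split.
- intros h. apply NNPP. intros h2. apply h. intros a ha. apply NNPP. intros hp. apply h2. eauto.
- intros (a & ha & hp) h. apply hp, h, ha.
Qed.

Section RingLemmas.
Variable R : comPzRingType.

Lemma ideal0 {I : R -> Prop} : is_ideal I -> I 0. Proof. intros (a&b&c); auto. Qed.
Lemma idealD {I : R -> Prop} x y : is_ideal I -> I x -> I y -> I (x + y). Proof. intros (a&b&c); auto. Qed.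
Lemma idealMl {I : R -> Prop} a x : is_ideal I -> I x -> I (a * x). Proof. intros (a'&b&c); auto. Qed.
Lemma idealMr {I : R -> Prop} a x : is_ideal I -> I x -> I (x * a).
Proof. intros h hx. rewrite mulrC. apply (idealMl _ _ h); auto. Qed.

Lemma prime_radical (P : R -> Prop) : is_prime_ideal P -> is_proper_radical_ideal P.
Proof.
intros (hi & h1 & hp). split; [|split]; auto.
intros x n. induction n as [|n IH].
- rewrite expr0. intros h; contradiction.
- rewrite exprS. intros h. destruct (hp _ _ h); auto.
Qed.

Lemma rad_not_pow (I : R -> Prop) x n : is_proper_radical_ideal I -> ~ I x -> ~ I (x ^+ n).
Proof. intros (_ & _ & h) hx hn. apply hx. eapply h; eauto. Qed.

Definition lsum (l : list (R * R)) : R := List.fold_right (fun p acc => p.1 * p.2 + acc) 0 l.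

Definition fin_ideal (S : R -> Prop) (y : R) : Prop :=
  exists l : list (R * R), (forall p, List.In p l -> S p.2) /\ y = lsum l.

Lemma lsum_app l1 l2 : lsum (List.app l1 l2) = lsum l1 + lsum l2.
Proof. induction l1 as [|p l1 IH]; simpl. by rewrite add0r. rewrite IH. by rewrite addrA. Qed.

Lemma lsum_map a l : lsum (List.map (fun p => (a * p.1, p.2)) l) = a * lsum l.
Proof. induction l as [|p l IH]; simpl. by rewrite mulr0. rewrite IH /=. ring. Qed.

Lemma fin_ideal_ideal S : is_ideal (fin_ideal S).
Proof.
split; [|split].
- exists nil. split; [intros p []| reflexivity].
- intros x y (l1 & a1 & ->) (l2 & a2 & ->). exists (List.app l1 l2). split.
  + intros p hp. apply List.in_app_or in hp. destruct hp; auto.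
  + by rewrite lsum_app.
- intros a x (l & h & ->). exists (List.map (fun p => (a * p.1, p.2)) l). split.
  + intros p hp. apply List.in_map_iff in hp. destruct hp as (q & <- & hq). apply (h q hq).
  + symmetry; apply lsum_map.
Qed.

Lemma fin_ideal_incl (S : R -> Prop) y : S y -> fin_ideal S y.
Proof.
intros hy. exists (cons (1, y) nil). split.
- intros p [<-|[]]; auto.
- simpl. by rewrite mul1r addr0.
Qed.

Lemma lsum_in (J : R -> Prop) l : is_ideal J -> (forall p, List.In p l -> J p.2) -> J (lsum l).
Proof.
intros hJ. induction l as [|p l IH]; intros h; simpl.
- exact (ideal0 hJ).
- apply (idealD _ _ hJ). apply (idealMl _ _ hJ). apply h; left; auto.
  apply IH; intros; apply h; right; auto.
Qed.

Lemma krull (I : R -> Prop) x : is_ideal I -> (forall n, ~ I (x ^+ n)) ->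
  exists P, is_prime_ideal P /\ (forall y, I y -> P y) /\ ~ P x.
Proof.
intros hI hx.
set (Fam := fun J : R -> Prop => is_ideal J /\ (forall y, I y -> J y) /\ forall n, ~ J (x ^+ n)).
set (T := {J : R -> Prop | Fam J}).
have t0 : T by exists I; split; [|split]; auto.
set (rl := fun s t : T => boolp.asbool (forall y, sval s y -> sval t y)).
destruct (@classical_sets.ZL_preorder T t0 rl) as [t tmax].
- intros t. apply/boolp.asboolP. auto.
- intros r s t h1 h2. apply/boolp.asboolP. move/boolp.asboolP: h1. move/boolp.asboolP: h2. auto.
- intros A Atot. destruct (classic (exists s, A s)) as [[s0 hs0]|hn].
  + set (U := fun y => exists s, A s /\ sval s y).
    have hU : Fam U.
    { split; [split; [|split]|split].
      - exists s0. split; auto. apply (ideal0 (proj1 (proj2_sig s0))).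
      - intros a b (s1 & q1 & r1) (s2 & q2 & r2).
        destruct (Atot s1 s2 q1 q2) as [h|h]; move/boolp.asboolP: h => h.
        + exists s2. split; auto. apply (idealD _ _ (proj1 (proj2_sig s2))); auto.
        + exists s1. split; auto. apply (idealD _ _ (proj1 (proj2_sig s1))); auto.
      - intros a b (s & q & r). exists s. split; auto. apply (idealMl _ _ (proj1 (proj2_sig s))); auto.
      - intros y hy. exists s0. split; auto. apply (proj2_sig s0); auto.
      - intros n (s & q & r). apply ((proj2 (proj2 (proj2_sig s))) n r). }
    exists (exist _ U hU). intros s hs. apply/boolp.asboolP. intros y hy. exists s. auto.
  + exists t0. intros s hs. exfalso; eauto.
- destruct t as [P [hPi [hIP hPx]]].
  have maxP : forall J, Fam J -> (forall y, P y -> J y) -> forall y, J y -> P y.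
  { intros J hJ hPJ. have := tmax (exist _ J hJ). unfold rl; simpl.
    move=> h. have h' := h (introT (boolp.asboolP _) hPJ). move/boolp.asboolP: h'. auto. }
  exists P. split; [split; [|split]|split]; auto.
  + intros h1. apply (hPx 0%N). by rewrite expr0.
  + intros a b hab. apply NNPP. intros hn. apply not_or_and in hn. destruct hn as [ha hb].
    have ext : forall c, ~ P c -> exists m p r, P p /\ x ^+ m = p + r * c.
    { intros c hc. set (Jc := fun y => exists p r, P p /\ y = p + r * c).
      have hJc : is_ideal Jc.
      { split; [|split].
        - exists 0, 0. split. apply (ideal0 hPi). by rewrite mul0r addr0.
        - intros u v (p1 & r1 & q1 & ->) (p2 & r2 & q2 & ->). exists (p1 + p2), (r1 + r2).
          split. apply (idealD _ _ hPi); auto. ring.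
        - intros u v (p1 & r1 & q1 & ->). exists (u * p1), (u * r1). split. apply (idealMl _ _ hPi); auto. ring. }
      destruct (classic (Fam Jc)) as [hF|hF].
      - exfalso. apply hc. apply (maxP Jc hF).
        + intros y hy. exists y, 0. split; auto. by rewrite mul0r addr0.
        + exists 0, 1. split. apply (ideal0 hPi). by rewrite add0r mul1r.
      - apply NNPP. intros hne. apply hF. split; [auto|split].
        + intros y hy. exists y, 0. split; auto. by rewrite mul0r addr0.
        + intros m hm. destruct hm as (p & r & q & e). apply hne. exists m, p, r. auto. }
    destruct (ext a ha) as (m & p1 & r1 & q1 & e1).
    destruct (ext b hb) as (n & p2 & r2 & q2 & e2).
    apply (hPx (m + n)%N). rewrite exprD e1 e2.
    have -> : (p1 + r1 * a) * (p2 + r2 * b) = p1 * (p2 + r2 * b) + (r1 * a * p2 + (r1 * r2) * (a * b)) by ring.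
    apply (idealD _ _ hPi). apply (idealMr _ _ hPi q1). apply (idealD _ _ hPi). apply (idealMl _ _ hPi q2). apply (idealMl _ _ hPi hab).
  + intros h. apply (hPx 1%N). by rewrite expr1.
Qed.

End RingLemmas.

Arguments ideal0 {R I}.
Arguments idealD {R I}.
Arguments idealMl {R I}.
Arguments idealMr {R I}.
Arguments fin_ideal {R}.
Arguments lsum {R}.
Arguments krull {R}.
Arguments fin_ideal_ideal {R}.
Arguments fin_ideal_incl {R}.
Arguments lsum_in {R}.
Arguments prime_radical {R}.
Arguments rad_not_pow {R}.

Section Generic.
Variable R : comPzRingType.

Lemma prod_list {X} (pt : X -> R -> Prop) (hid : forall y, is_ideal (pt y)) (x0 : X)
  (hp : is_prime_ideal (pt x0)) (l : list (X -> Prop)) :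
  (forall V, List.In V l -> exists g, ~ pt x0 g /\ forall y, ~ pt y g -> V y) ->
  exists g, ~ pt x0 g /\ forall y, ~ pt y g -> forall V, List.In V l -> V y.
Proof.
induction l as [|V l IH]; intros H.
- exists 1. split. apply (proj1 (proj2 hp)). intros y _ V [].
- destruct (H V (or_introl (erefl _))) as (g1 & a1 & b1).
  destruct IH as (g2 & a2 & b2). { intros; apply H; right; auto. }
  exists (g1 * g2). split.
  + intros h. destruct (proj2 (proj2 hp) _ _ h); auto.
  + intros y hy W [<-|hW].
    * apply b1. intros h. apply hy. apply (idealMr _ _ (hid y) h).
    * apply b2; auto. intros h. apply hy. apply (idealMl _ _ (hid y) h).
Qed.

Lemma qc_from_primes {X} (T : topology X) (pt : X -> R -> Prop)
  (hrad : forall y, is_proper_radical_ideal (pt y))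
  (hsurj : forall P, is_prime_ideal P -> exists y, pt y = P)
  (hloc : forall U y, T U -> U y -> is_prime_ideal (pt y) ->
            exists g, ~ pt y g /\ forall z, ~ pt z g -> U z)
  (fs : list R) : quasi_compact T (fun y => exists f, List.In f fs /\ ~ pt y f).
Proof.
intros Cov hop hcov.
set (S := fun g => exists U, Cov U /\ forall z, ~ pt z g -> U z).
have claim1 : forall f, List.In f fs -> exists n, fin_ideal S (f ^+ n).
{ intros f hf. apply NNPP. intros hn.
  destruct (krull (fin_ideal S) f (fin_ideal_ideal S)) as (P & hP & hSP & hPf).
  { intros n h. apply hn. exists n. auto. }
  destruct (hsurj P hP) as (y & <-).
  destruct (hcov y (ex_intro _ f (conj hf hPf))) as (U & hU & Uy).
  destruct (hloc U y (hop U hU) Uy hP) as (g & hg & hgU).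
  apply hg. apply hSP. apply fin_ideal_incl. exists U. auto. }
have claim2 : forall l : list (R * R), (forall p, List.In p l -> S p.2) ->
   exists Us, (forall U, List.In U Us -> Cov U) /\
              forall z, ~ pt z (lsum l) -> exists U, List.In U Us /\ U z.
{ induction l as [|p l IH]; intros hl.
  - exists nil. split; [intros U []|]. intros z hz. exfalso. apply hz. apply (ideal0 (proj1 (hrad z))).
  - destruct (hl p (or_introl (erefl _))) as (U0 & hU0 & hU0').
    destruct IH as (Us & a & b). { intros; apply hl; right; auto. }
    exists (cons U0 Us). split.
    + intros U [<-|hU]; auto.
    + intros z hz. destruct (classic (pt z p.2)) as [h2|h2].
      * destruct (classic (pt z (lsum l))) as [h3|h3].
        -- exfalso. apply hz. simpl. apply (idealD _ _ (proj1 (hrad z))); auto.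
           apply (idealMl _ _ (proj1 (hrad z))); auto.
        -- destruct (b z h3) as (U & q1 & q2). exists U; split; [right|]; auto.
      * exists U0. split; [left|]; auto. }
have claim3 : forall fs', (forall f, List.In f fs' -> List.In f fs) ->
   exists Us, (forall U, List.In U Us -> Cov U) /\
     forall z, (exists f, List.In f fs' /\ ~ pt z f) -> exists U, List.In U Us /\ U z.
{ induction fs' as [|f fs' IH]; intros hsub.
  - exists nil. split; [intros U []|]. intros z (? & [] & _).
  - destruct (claim1 f (hsub f (or_introl (erefl _)))) as (n & l & hl & e).
    destruct (claim2 l hl) as (Us1 & a1 & b1).
    destruct IH as (Us2 & a2 & b2). { intros; apply hsub; right; auto. }
    exists (List.app Us1 Us2). split.
    + intros U hU. apply List.in_app_or in hU. destruct hU; auto.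
    + intros z (f' & [<-|hf'] & hz).
      * destruct (b1 z) as (U & q1 & q2).
        { rewrite -e. apply rad_not_pow; auto. }
        exists U; split; auto. apply List.in_or_app; auto.
      * destruct (b2 z (ex_intro _ f' (conj hf' hz))) as (U & q1 & q2).
        exists U; split; auto. apply List.in_or_app; auto. }
destruct (claim3 fs (fun f h => h)) as (Us & a & b). exists Us. split; auto.
Qed.

End Generic.

Arguments prod_list {R X}.
Arguments qc_from_primes {R X}.

Lemma sig_eq {A} {Q : A -> Prop} (a b : {x : A | Q x}) : sval a = sval b -> a = b.
Proof. destruct a as [a ha], b as [b hb]; simpl; intros ->. f_equal. apply proof_irrelevance. Qed.

Section SpecSec.
Variable R : comPzRingType.

Lemma hloc_zar (U : Spec R -> Prop) (P : Spec R) : zariski R U -> U P ->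
  exists g, ~ sval P g /\ forall Q : Spec R, ~ sval Q g -> U Q.
Proof.
intros hU hP. destruct (hU P hP) as (l & h1 & h2).
destruct (prod_list (fun Q : Spec R => sval Q) (fun Q => proj1 (proj2_sig Q)) P (proj2_sig P) l) as (g & a & b).
- intros V hV. destruct (h1 V hV) as ((f & hf) & VP). exists f. split.
  + apply hf; auto.
  + intros y hy; apply hf; auto.
- exists g. split; auto. intros Q hQ. apply h2. apply b; auto.
Qed.

Lemma open_D (fs : list R) : zariski R (fun P : Spec R => exists f, List.In f fs /\ ~ sval P f).
Proof.
apply gen_local. intros P (f & hf & hPf). exists (fun Q : Spec R => ~ sval Q f). split; [|split].
- apply gen_sub. exists f. intros; tauto.
- exact hPf.
- intros Q hQ. eauto.
Qed.

Lemma qc_D (fs : list R) : quasi_compact (zariski R) (fun P : Spec R => exists f, List.In f fs /\ ~ sval P f).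
Proof.
apply (qc_from_primes (zariski R) (fun P : Spec R => sval P)).
- intros y. apply prime_radical, (proj2_sig y).
- intros P hP. exists (exist _ P hP). reflexivity.
- intros U y hU Uy _. apply hloc_zar; auto.
Qed.

Lemma closed_VJ (C : Spec R -> Prop) : is_closed (zariski R) C -> forall P : Spec R,
  (forall x, (forall Q : Spec R, C Q -> sval Q x) -> sval P x) -> C P.
Proof.
intros hC P hP. apply NNPP. intros hnP.
destruct (hloc_zar _ P hC hnP) as (g & hg & hgC).
apply hg. apply hP. intros Q hQ. apply NNPP. intros hQg. apply (hgC Q hQg hQ).
Qed.

Lemma J_rad (C : Xp R) : is_proper_radical_ideal (Jmap R C).
Proof.
destruct C as [C [hC [P0 hP0]]]. unfold Jmap; simpl.
split; [split; [|split]|split].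
- intros P _. apply (ideal0 (proj1 (proj2_sig P))).
- intros x y hx hy P hP. apply (idealD _ _ (proj1 (proj2_sig P))); auto.
- intros a x hx P hP. apply (idealMl _ _ (proj1 (proj2_sig P))); auto.
- intros h. apply (proj1 (proj2 (proj2_sig P0))). auto.
- intros x n hx P hP. apply (proj2 (proj2 (prime_radical _ (proj2_sig P))) x n); auto.
Qed.

Definition Vset (I : R -> Prop) : Spec R -> Prop := fun P => forall x, I x -> sval P x.

Lemma V_closed I : is_closed (zariski R) (Vset I).
Proof.
apply gen_local. intros P hP. apply not_all_ex_not in hP. destruct hP as (x & hx).
apply imply_to_and in hx. destruct hx as [hIx hPx].
exists (fun Q : Spec R => ~ sval Q x). split; [|split].
- apply gen_sub. exists x. intros; tauto.
- exact hPx.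
- intros Q hQ hV. apply hQ, hV, hIx.
Qed.

Lemma V_ne (I : Rd R) : exists P, Vset (sval I) P.
Proof.
destruct (krull (sval I) 1 (proj1 (proj2_sig I))) as (P & hP & hIP & _).
- intros n. rewrite expr1n. apply (proj1 (proj2 (proj2_sig I))).
- exists (exist _ P hP). intros x hx. apply hIP, hx.
Qed.

Definition Hm (C : Xp R) : Rd R := exist _ (Jmap R C) (J_rad C).
Definition Gm (I : Rd R) : Xp R := exist _ (Vset (sval I)) (conj (V_closed (sval I)) (V_ne I)).

Lemma JG (I : Rd R) : Jmap R (Gm I) = sval I.
Proof.
apply functional_extensionality. intros x. apply propositional_extensionality. split.
- intros h. apply NNPP. intros hx.
  destruct (krull (sval I) x (proj1 (proj2_sig I))) as (P & hP & hIP & hPx).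
  + intros n. apply rad_not_pow; auto. apply (proj2_sig I).
  + apply hPx. apply (h (exist _ P hP)). intros y hy. apply hIP, hy.
- intros hx P hP. apply hP, hx.
Qed.

Lemma HG (I : Rd R) : Hm (Gm I) = I.
Proof. apply sig_eq. simpl. apply JG. Qed.

Lemma GH (C : Xp R) : Gm (Hm C) = C.
Proof.
apply sig_eq. simpl. apply functional_extensionality. intros P. apply propositional_extensionality.
split.
- intros h. apply closed_VJ. apply (proj1 (proj2_sig C)). intros x hx. apply h. exact hx.
- intros hP x hx. apply hx, hP.
Qed.

Definition Wx (fs : list R) (Y : Xp R) : Prop := forall f, List.In f fs -> Jmap R Y f.
Definition BX (U : Xp R -> Prop) : Prop := exists fs, forall Y, U Y <-> Wx fs Y.

Lemma Xp_zar_eq : Xp_zar R = generated BX.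
Proof.
unfold Xp_zar. f_equal. apply functional_extensionality. intros U. apply propositional_extensionality.
split.
- intros (Om & hOm & qcOm & hU).
  set (Cov := fun W : Spec R -> Prop => (exists f, forall P, W P <-> ~ sval P f) /\ forall P, W P -> Om P).
  destruct (qcOm Cov) as (Ws & h1 & h2).
  + intros W ((f & hf) & _). apply gen_sub. exists f. auto.
  + intros P hP. destruct (hloc_zar Om P hOm hP) as (g & hg & hgO).
    exists (fun Q : Spec R => ~ sval Q g). split; auto. split; auto. exists g; intros; tauto.
  + destruct (list_choice Ws (fun W f => forall P, W P <-> ~ sval P f)) as (fs & a & b).
    { intros W hW. apply (proj1 (h1 W hW)). }
    have hOm' : forall P, Om P <-> exists f, List.In f fs /\ ~ sval P f.
    { intros P; split.
      - intros hP. destruct (h2 P hP) as (W & hW & WP). destruct (b W hW) as (f & q1 & q2).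
        exists f. split; auto. apply q2; auto.
      - intros (f & hf & hPf). destruct (a f hf) as (W & q1 & q2). apply (proj2 (h1 W q1)). apply q2; auto. }
    exists fs. intros Y. rewrite hU. unfold Wx, Jmap. split.
    * intros h f hf P hP. apply NNPP. intros hn. apply (h P hP). apply hOm'. eauto.
    * intros h P hP hO. apply hOm' in hO. destruct hO as (f & hf & hPf). apply hPf, h; auto.
- intros (fs & hU). exists (fun P : Spec R => exists f, List.In f fs /\ ~ sval P f).
  split; [apply open_D|split; [apply qc_D|]].
  intros Y. rewrite hU. unfold Wx, Jmap. split.
  + intros h P hP (f & hf & hPf). apply hPf, h; auto.
  + intros h f hf P hP. apply NNPP. intros hn. apply (h P hP). eauto.
Qed.

Definition BRc (U : Rd R -> Prop) : Prop :=
  exists C, (exists xs, forall H : Rd R, C H <-> forall x, List.In x xs -> sval H x) /\ forall x, U x <-> ~ C x.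

Lemma hk_eq : Rd_hk R = generated BRc.
Proof. reflexivity. Qed.

Lemma qc_hk (fs : list R) : quasi_compact (Rd_hk R) (fun H : Rd R => exists f, List.In f fs /\ ~ sval H f).
Proof.
apply (qc_from_primes (Rd_hk R) (fun H : Rd R => sval H)).
- intros y. apply (proj2_sig y).
- intros P hP. exists (exist _ P (prime_radical _ hP)). reflexivity.
- intros U y hU Uy hp. destruct (hU y Uy) as (l & h1 & h2).
  destruct (prod_list (fun Q : Rd R => sval Q) (fun Q => proj1 (proj2_sig Q)) y hp l) as (g & a & b).
  + intros V hV. destruct (h1 V hV) as ((C & (xs & hC) & hVC) & Vy).
    apply hVC in Vy. rewrite hC in Vy. apply not_all_in in Vy. destruct Vy as (x & hx & hyx).
    exists x. split; auto. intros z hz. apply hVC. rewrite hC. intros h. apply hz, h, hx.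
  + exists g. split; auto. intros Q hQ. apply h2. apply b; auto.
Qed.

End SpecSec.

Section Main.
Variable R : comPzRingType.

Lemma mono (U : Xp R -> Prop) (Y0 Y : Xp R) : generated (BX R) U -> U Y0 ->
  (forall x, Jmap R Y0 x -> Jmap R Y x) -> U Y.
Proof.
intros hU hY0 hJ. destruct (hU Y0 hY0) as (l & h1 & h2). apply h2.
intros V hV. destruct (h1 V hV) as ((fs & hfs) & VY0). apply hfs. apply hfs in VY0.
intros f hf. apply hJ, VY0, hf.
Qed.

Lemma Wx_open fs : generated (BX R) (Wx R fs).
Proof. apply gen_sub. exists fs. intros; tauto. Qed.

Lemma qcW fs : quasi_compact (generated (BX R)) (Wx R fs).
Proof.
destruct (classic (exists Y, Wx R fs Y)) as [[Y hY]|hn].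
- set (I0 := fun y => forall H : Rd R, (forall f, List.In f fs -> sval H f) -> sval H y).
  have hI0 : is_proper_radical_ideal I0.
  { split; [split; [|split]|split].
    - intros H _. apply (ideal0 (proj1 (proj2_sig H))).
    - intros x y hx hy H hH. apply (idealD _ _ (proj1 (proj2_sig H))); auto.
    - intros a x hx H hH. apply (idealMl _ _ (proj1 (proj2_sig H))); auto.
    - intros h. apply (proj1 (proj2 (proj2_sig (Hm R Y)))). apply h. intros f hf. apply hY, hf.
    - intros x n hx H hH. apply (proj2 (proj2 (proj2_sig H)) x n); auto. }
  set (Y0 := Gm R (exist _ I0 hI0)).
  have hJ0 : Jmap R Y0 = I0 by apply (JG R (exist _ I0 hI0)).
  intros Cov hop hcov.
  have hY0 : Wx R fs Y0. { intros f hf. rewrite hJ0. intros H hH. apply hH, hf. }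
  destruct (hcov Y0 hY0) as (U & hU & UY0).
  exists (cons U nil). split.
  + intros U' [<-|[]]; auto.
  + intros Y' hY'. exists U. split; [left; auto|].
    apply (mono U Y0 Y' (hop U hU) UY0). rewrite hJ0. intros x hx. apply (hx (Hm R Y')). apply hY'.
- intros Cov _ _. exists nil. split; [intros U []|]. intros Y hY. exfalso; eauto.
Qed.

Lemma bx_inter (l : list (Xp R -> Prop)) : (forall V, List.In V l -> BX R V) ->
  exists fs, forall Y, (forall V, List.In V l -> V Y) <-> Wx R fs Y.
Proof.
induction l as [|V l IH]; intros H.
- exists nil. intros Y; split; intros _ ? [].
- destruct (H V (or_introl (erefl _))) as (fs1 & h1).
  destruct IH as (fs2 & h2). { intros; apply H; right; auto. }
  exists (List.app fs1 fs2). intros Y. split.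
  + intros h f hf. apply List.in_app_or in hf. destruct hf as [hf|hf].
    * apply h1; auto. apply h; left; auto.
    * apply h2; auto. intros; apply h; right; auto.
  + intros h W [<-|hW].
    * apply h1. intros f hf. apply h. apply List.in_or_app; auto.
    * apply (proj2 (h2 Y)); auto. intros f hf. apply h. apply List.in_or_app; auto.
Qed.

Lemma qc_open_W K : generated (BX R) K -> quasi_compact (generated (BX R)) K ->
  exists F : list (list R), forall Y, K Y <-> exists fs, List.In fs F /\ Wx R fs Y.
Proof.
intros op qc. destruct (qc_decomp K qc op) as (ls & h1 & h2).
destruct (list_choice ls (fun l fs => forall Y, (forall V, List.In V l -> V Y) <-> Wx R fs Y)) as (F & a & b).
{ intros l hl. apply bx_inter. intros V hV; apply (h1 l); auto. }
exists F. intros Y. rewrite h2. split.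
- intros (l & hl & hY). destruct (b l hl) as (fs & q1 & q2). exists fs. split; auto. apply (proj1 (q2 Y)); auto.
- intros (fs0 & hfs & hY). destruct (a fs0 hfs) as (l & q1 & q2). exists l. split; auto. apply (proj2 (q2 Y)); auto.
Qed.

Lemma closure_char (Z Y : Xp R) : in_closure_pt (generated (BX R)) Z Y <-> forall x, Jmap R Y x -> Jmap R Z x.
Proof.
split.
- intros h x hx. have := h (Wx R (cons x nil)) (Wx_open _).
  intros h'. apply h'. intros f [<-|[]]; auto. left; auto.
- intros h U hU UY. apply (mono U Y Z hU UY h).
Qed.

Lemma Hm_inj (x y : Xp R) : (forall f, Jmap R x f <-> Jmap R y f) -> x = y.
Proof.
intros h. rewrite -(GH R x) -(GH R y). f_equal. apply sig_eq. simpl.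
apply functional_extensionality. intros f. apply propositional_extensionality. apply h.
Qed.

Lemma spectral_Xp : spectral (generated (BX R)).
Proof.
split; [|split; [|split; [|split]]].
- intros x y h. apply Hm_inj. intros f.
  have := h (Wx R (cons f nil)) (Wx_open _). unfold Wx. intros [h1 h2]. split.
  + intros hx. apply h1. intros g [<-|[]]; auto. left; auto.
  + intros hy. apply h2. intros g [<-|[]]; auto. left; auto.
- apply (qc_ext _ (Wx R nil)). intros; split; auto. intros _ f []. apply qcW.
- intros U V hU qU hV qV.
  destruct (qc_open_W U hU qU) as (F1 & e1).
  destruct (qc_open_W V hV qV) as (F2 & e2).
  apply (qc_ext _ (fun Y => exists p, List.In p (List.list_prod F1 F2) /\ Wx R (List.app p.1 p.2) Y)).
  + intros Y. rewrite e1 e2. split.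
    * intros ((a, b) & hp & hY). apply List.in_prod_iff in hp. destruct hp as [ha hb].
      split; [exists a|exists b]; split; auto; intros f hf; apply hY; apply List.in_or_app; auto.
    * intros ((a & ha & hYa) & (b & hb & hYb)). exists (a, b). split.
      -- apply List.in_prod; auto.
      -- intros f hf. apply List.in_app_or in hf. destruct hf; auto.
  + apply qc_union_list. intros p _. apply qcW.
- intros U x hU hx. destruct (hU x hx) as (l & h1 & h2).
  destruct (bx_inter l) as (fs & hfs). { intros V hV; apply h1; auto. }
  exists (Wx R fs). split; [apply Wx_open|split; [apply qcW|split]].
  + apply (proj1 (hfs x)). intros; apply h1; auto.
  + intros y hy. apply h2. apply (proj2 (hfs y)); auto.
- intros C hC [[Y1 hY1] hirr].
  set (I := fun x => exists Y, C Y /\ Jmap R Y x).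
  have dir : forall fs gs, (exists Y, C Y /\ Wx R fs Y) -> (exists Y, C Y /\ Wx R gs Y) ->
                exists Y, C Y /\ Wx R (List.app fs gs) Y.
  { intros fs gs (Ya & hCa & ha) (Yb & hCb & hb). apply NNPP. intros hn.
    destruct (hirr (fun Y => ~ Wx R fs Y) (fun Y => ~ Wx R gs Y)) as [h|h].
    - unfold is_closed. eapply gen_ext; [|apply (Wx_open fs)]. intros Y; split; [auto|apply NNPP].
    - unfold is_closed. eapply gen_ext; [|apply (Wx_open gs)]. intros Y; split; [auto|apply NNPP].
    - intros Y hY. apply NNPP. intros hn2. apply not_or_and in hn2. destruct hn2 as [q1 q2].
      apply NNPP in q1. apply NNPP in q2. apply hn. exists Y. split; auto.
      intros f hf. apply List.in_app_or in hf. destruct hf; auto.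
    - apply (h Ya hCa ha).
    - apply (h Yb hCb hb). }
  have dirl : forall fs, (forall f, List.In f fs -> I f) -> exists Y, C Y /\ Wx R fs Y.
  { induction fs as [|f fs IH]; intros H.
    - exists Y1. split; auto. intros f [].
    - apply (dir (cons f nil) fs).
      + destruct (H f (or_introl (erefl _))) as (Y & hY & hYf). exists Y. split; auto.
        intros g [<-|[]]; auto.
      + apply IH. intros; apply H; right; auto. }
  have hIr : is_proper_radical_ideal I.
  { split; [split; [|split]|split].
    - exists Y1. split; auto. apply (ideal0 (proj1 (J_rad R Y1))).
    - intros x y hx hy. destruct (dirl (cons x (cons y nil))) as (Y & hY & hW).
      + intros g [<-|[<-|[]]]; auto.
      + exists Y. split; auto. apply (idealD _ _ (proj1 (J_rad R Y))); apply hW; simpl; auto.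
    - intros a x (Y & hY & hx). exists Y. split; auto. apply (idealMl _ _ (proj1 (J_rad R Y))); auto.
    - intros (Y & hY & h1). apply (proj1 (proj2 (J_rad R Y))), h1.
    - intros x n (Y & hY & hx). exists Y. split; auto. apply (proj2 (proj2 (J_rad R Y)) x n), hx. }
  exists (Gm R (exist _ I hIr)). intros Y. rewrite closure_char JG. simpl. split.
  + intros hY x hx. exists Y. auto.
  + intros hJ. apply NNPP. intros hnC.
    destruct (hC Y hnC) as (l & h1 & h2).
    destruct (bx_inter l) as (fs & hfs). { intros V hV; apply h1; auto. }
    have hYfs : Wx R fs Y by apply (proj1 (hfs Y)); intros; apply h1; auto.
    destruct (dirl fs) as (Y' & hY' & hW').
    * intros f hf. apply hJ, hYfs, hf.
    * exact (h2 Y' (proj2 (hfs Y') hW') hY').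
Qed.

Theorem main_thm :
  (exists h : Xp R -> Rd R,
      (forall C : Xp R, sval (h C) = Jmap R C) /\
      homeomorphism (Xp_zar R) (inverse_top (Rd_hk R)) h /\
      homeomorphism (inverse_top (Xp_zar R)) (Rd_hk R) h) /\
  spectral (Xp_zar R).
Proof.
rewrite Xp_zar_eq. split; [|apply spectral_Xp].
exists (Hm R). split; [intros; reflexivity|split].
- exists (Gm R). split; [apply GH|split; [apply HG|split]].
  + unfold inverse_top, generated_closed. apply cont_gen.
    intros V (C & (hC & qcC) & hV). rewrite hk_eq in hC qcC.
    destruct (qc_decomp C qcC hC) as (ls & h1 & h2).
    eapply gen_ext; [|apply (gen_cnf ls (fun V' Y => ~ V' (Hm R Y)))].
    * intros Y. rewrite hV h2. split.
      -- intros h (l & hl & hall). destruct (h l hl) as (V' & q1 & q2). exact (q2 (hall V' q1)).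
      -- intros h l hl. apply not_all_in. intros h'. apply h. eauto.
    * intros l V' hl hV'. destruct (h1 l V' hl hV') as (C' & (xs & hC') & hVC').
      eapply gen_ext; [|apply (Wx_open xs)]. intros Y. rewrite hVC' hC'. simpl. split.
      -- intros h hn. apply hn, h.
      -- intros h. apply NNPP in h. exact h.
  + apply cont_gen. intros V (fs & hV).
    apply gen_sub. exists (fun I : Rd R => exists f, List.In f fs /\ ~ sval I f). split; [split|].
    * rewrite hk_eq. apply gen_sub. exists (fun I : Rd R => forall f, List.In f fs -> sval I f).
      split; [exists fs; intros; tauto|]. intros I. split.
      -- intros (f & hf & hIf) h. apply hIf, h, hf.
      -- intros h. apply not_all_in in h. auto.
    * apply qc_hk.
    * intros I. rewrite hV. unfold Wx. rewrite JG. split.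
      -- intros h (f & hf & hIf). apply hIf, h, hf.
      -- intros h f hf. apply NNPP. intros hn. eauto.
- exists (Gm R). split; [apply GH|split; [apply HG|split]].
  + rewrite hk_eq. apply cont_gen. intros V (C & (xs & hC) & hV).
    apply gen_sub. exists (Wx R xs). split; [split; [apply Wx_open|apply qcW]|].
    intros Y. rewrite hV hC. simpl. unfold Wx. tauto.
  + rewrite hk_eq. unfold inverse_top, generated_closed. apply cont_gen.
    intros V (C & (hC & qcC) & hV).
    destruct (qc_decomp C qcC hC) as (ls & h1 & h2).
    eapply gen_ext; [|apply (gen_cnf ls (fun V' I => ~ V' (Gm R I)))].
    * intros I. rewrite hV h2. split.
      -- intros h (l & hl & hall). destruct (h l hl) as (V' & q1 & q2). exact (q2 (hall V' q1)).
      -- intros h l hl. apply not_all_in. intros h'. apply h. eauto.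
    * intros l V' hl hV'. destruct (h1 l V' hl hV') as (fs & hfs).
      apply gen_sub. exists (fun I : Rd R => forall f, List.In f fs -> sval I f).
      split; [exists fs; intros; tauto|]. intros I. rewrite hfs. unfold Wx. rewrite JG. tauto.
Qed.

End Main.

Theorem theorem4p1 (R : comPzRingType) :
  (exists h : Xp R -> Rd R,
      (forall C : Xp R, sval (h C) = Jmap R C) /\
      homeomorphism (Xp_zar R) (inverse_top (Rd_hk R)) h /\
      homeomorphism (inverse_top (Xp_zar R)) (Rd_hk R) h) /\
  spectral (Xp_zar R).
Proof. exact (main_thm R). Qed.
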